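(* Let $(W,\lambda)$ be an initial algebra of $N\otimes-$ on $\mathsf{SquaMS}$ and $V=C(W)$ its Cauchy completion. Then $V$ is isomorphic (in $\mathsf{SquaMS}$) to $U_0$ with the taxicab metric.
   Context: Let $M_0=\{(r,s)\in[0,1]^2: r\in\{0,1\}\text{ or } s\in\{0,1\}\}$. A square metric space is a pair $(X,S_X)$ with $X$ a metric space with all distances at most $2$ and $S_X\colon M_0\to X$ injective such that (sq1) for $i\in\{0,1\}$, $r,s\in[0,1]$: $d_X(S_X(i,r),S_X(i,s))=|s-r|$ and $d_X(S_X(r,i),S_X(s,i))=|s-r|$; (sq2) $d_X(S_X(r,s),S_X(t,u))\ge|r-t|+|s-u|$. $\mathsf{SquaMS}$: these objects, with short maps $f$ satisfying $f\circ S_X=S_Y$ as morphisms. Let $N=\{0,1,2\}^2$, also viewed as points of $\mathbb{R}^2$. For $X$ in $\mathsf{SquaMS}$, $N\otimes X=(N\times X)/\!\sim$, where $\sim$ is generated by $(m,S_X(p))\sim(n,S_X(q))$ whenever $m,n\in N$ differ by exactly $1$ in exactly one coordinate and $(m+p)/3=(n+q)/3$; $n\otimes x$ is the class of $(n,x)$. With $d((a,u),(b,v))=\frac13 d_X(u,v)$ if $a=b$ and $2$ otherwise, $N\otimes X$ gets the quotient metric. $S_{N\otimes X}(p)=n\otimes S_X(3p-n)$ for any $n\in N$ with $p\in(n+[0,1]^2)/3$; $(N\otimes f)(n\otimes x)=n\otimes f(x)$. The Cauchy completion $C(X)$ has $S_{C(X)}(p)$ the class of the constant sequence $S_X(p)$.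 $U_0=[0,1]^2$ with the taxicab metric $|x-x'|+|y-y'|$ and $S_{U_0}$ the inclusion of $M_0$. *)

(* Defs.v *)
From Stdlib Require Import Reals Lra Relations ClassicalEpsilon.
From Coquelicot Require Import Coquelicot.
Open Scope R_scope.

(* A "pre-object": carrier, distance, and the boundary map S : M0 -> X,
   given as a total function R -> R -> X of which only the values on M0
   are ever used. *)
Record sqdata := SqData {
  sq_car : Type;
  sq_dist : sq_car -> sq_car -> R;
  sq_map : R -> R -> sq_car }.

Definition inI (x : R) : Prop := 0 <= x <= 1.
Definition inM0 (r s : R) : Prop :=
  inI r /\ inI s /\ (r = 0 \/ r = 1 \/ s = 0 \/ s = 1).

Definition is_metric (X : Type) (d : X -> X -> R) : Prop :=
  (forall x y, d x y = 0 <-> x = y) /\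
  (forall x y, d x y = d y x) /\
  (forall x y z, d x z <= d x y + d y z).

Definition IsSquaMS (X : sqdata) : Prop :=
  is_metric (sq_car X) (sq_dist X) /\
  (forall x y, sq_dist X x y <= 2) /\
  (forall r s t u, inM0 r s -> inM0 t u -> sq_map X r s = sq_map X t u ->
     r = t /\ s = u) /\
  (forall i r s, (i = 0 \/ i = 1) -> inI r -> inI s ->
     sq_dist X (sq_map X i r) (sq_map X i s) = Rabs (s - r) /\
     sq_dist X (sq_map X r i) (sq_map X s i) = Rabs (s - r)) /\
  (forall r s t u, inM0 r s -> inM0 t u ->
     sq_dist X (sq_map X r s) (sq_map X t u) >= Rabs (r - t) + Rabs (s - u)).

Definition is_hom (X Y : sqdata) (f : sq_car X -> sq_car Y) : Prop :=
  (forall x y, sq_dist Y (f x) (f y) <= sq_dist X x y) /\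
  (forall r s, inM0 r s -> f (sq_map X r s) = sq_map Y r s).

Definition sq_iso (X Y : sqdata) : Prop :=
  exists (f : sq_car X -> sq_car Y) (g : sq_car Y -> sq_car X),
    is_hom X Y f /\ is_hom Y X g /\
    (forall x, g (f x) = x) /\ (forall y, f (g y) = y).

Inductive three := T0 | T1 | T2.
Definition t2R (t : three) : R := match t with T0 => 0 | T1 => 1 | T2 => 2 end.
Definition N : Type := (three * three)%type.

Definition N_eq_dec (m n : N) : {m = n} + {m <> n}.
Proof. repeat decide equality. Defined.

Definition adjacent (m n : N) : Prop :=
  (fst m = fst n /\ Rabs (t2R (snd m) - t2R (snd n)) = 1) \/
  (snd m = snd n /\ Rabs (t2R (fst m) - t2R (fst n)) = 1).

Definition tgen (X : sqdata) (a b : N * sq_car X) : Prop :=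
  exists r s t u, inM0 r s /\ inM0 t u /\
    snd a = sq_map X r s /\ snd b = sq_map X t u /\
    adjacent (fst a) (fst b) /\
    (t2R (fst (fst a)) + r) / 3 = (t2R (fst (fst b)) + t) / 3 /\
    (t2R (snd (fst a)) + s) / 3 = (t2R (snd (fst b)) + u) / 3.

Definition teqv (X : sqdata) := clos_refl_sym_trans _ (tgen X).

(* the quotient (N x X)/~ as the set of equivalence classes *)
Definition tcar (X : sqdata) : Type :=
  { A : N * sq_car X -> Prop | exists a, forall b, A b <-> teqv X a b }.

Definition tcls (X : sqdata) (a : N * sq_car X) : tcar X :=
  exist _ (fun b => teqv X a b) (ex_intro _ a (fun b => iff_refl _)).

Definition tbase (X : sqdata) (a b : N * sq_car X) : R :=
  if N_eq_dec (fst a) (fst b) then sq_dist X (snd a) (snd b) / 3 else 2.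

(* chains x_1 -> y_1 ~ x_2 -> y_2 ~ ... -> y_k, with total cost
   sum_i d(x_i, y_i) *)
Inductive tchain (X : sqdata) : N * sq_car X -> N * sq_car X -> R -> Prop :=
| tch_one a b : tchain X a b (tbase X a b)
| tch_step a b b' c e :
    teqv X b b' -> tchain X b' c e -> tchain X a c (tbase X a b + e).

Definition tdist (X : sqdata) (A B : tcar X) : R :=
  real (Glb_Rbar (fun e => exists a b,
          proj1_sig A a /\ proj1_sig B b /\ tchain X a b e)).

(* choice of a cell n with p in (n + [0,1]^2)/3 *)
Definition tidx (r : R) : three :=
  if Rlt_dec r (1/3) then T0 else if Rlt_dec r (2/3) then T1 else T2.

Definition tsqm (X : sqdata) (r s : R) : tcar X :=
  tcls X ((tidx r, tidx s),
          sq_map X (3 * r - t2R (tidx r)) (3 * s - t2R (tidx s))).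

Definition tensor (X : sqdata) : sqdata := SqData (tcar X) (tdist X) (tsqm X).

Definition trep (X : sqdata) (A : tcar X) : N * sq_car X :=
  proj1_sig (constructive_indefinite_description _ (proj2_sig A)).

Definition tensor_map (X Y : sqdata) (f : sq_car X -> sq_car Y)
  (A : sq_car (tensor X)) : sq_car (tensor Y) :=
  tcls Y (fst (trep X A), f (snd (trep X A))).

Definition is_initial_algebra (W : sqdata)
  (lam : sq_car (tensor W) -> sq_car W) : Prop :=
  is_hom (tensor W) W lam /\
  forall (Y : sqdata) (alpha : sq_car (tensor Y) -> sq_car Y),
    IsSquaMS Y -> is_hom (tensor Y) Y alpha ->
    exists! h : sq_car W -> sq_car Y,
      is_hom W Y h /\ (forall z, h (lam z) = alpha (tensor_map W Y h z)).

Definition cauchy (X : sqdata) (u : nat -> sq_car X) : Prop :=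
  forall eps, eps > 0 -> exists M, forall m n, (M <= m)%nat -> (M <= n)%nat ->
    sq_dist X (u m) (u n) < eps.

Definition ceqv (X : sqdata) (u v : nat -> sq_car X) : Prop :=
  cauchy X u /\ cauchy X v /\ is_lim_seq (fun n => sq_dist X (u n) (v n)) 0.

Definition ccar (X : sqdata) : Type :=
  { A : (nat -> sq_car X) -> Prop |
      exists u, cauchy X u /\ forall v, A v <-> ceqv X u v }.

Definition crep (X : sqdata) (A : ccar X) : nat -> sq_car X :=
  proj1_sig (constructive_indefinite_description _ (proj2_sig A)).

Definition cdist (X : sqdata) (A B : ccar X) : R :=
  real (Lim_seq (fun n => sq_dist X (crep X A n) (crep X B n))).

Lemma const_cauchy (X : sqdata) (H : IsSquaMS X) (x : sq_car X) :
  cauchy X (fun _ => x).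
Proof.
  destruct H as [[Hd _] _]. intros eps He. exists 0%nat. intros m n _ _.
  rewrite (proj2 (Hd x x) eq_refl). lra.
Qed.

Definition csqm (X : sqdata) (H : IsSquaMS X) (r s : R) : ccar X :=
  exist _ (fun v => ceqv X (fun _ => sq_map X r s) v)
    (ex_intro _ (fun _ => sq_map X r s)
       (conj (const_cauchy X H (sq_map X r s)) (fun v => iff_refl _))).

Definition completion (X : sqdata) (H : IsSquaMS X) : sqdata :=
  SqData (ccar X) (cdist X) (csqm X H).

Definition U0car : Type := { p : R * R | inI (fst p) /\ inI (snd p) }.

Definition clamp (x : R) : R := Rmax 0 (Rmin 1 x).

Lemma clamp_in (x : R) : inI (clamp x).
Proof.
  unfold inI, clamp, Rmax, Rmin.
  destruct (Rle_dec 1 x); destruct (Rle_dec 0 _); lra.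
Qed.

Definition U0dist (p q : U0car) : R :=
  Rabs (fst (proj1_sig p) - fst (proj1_sig q)) +
  Rabs (snd (proj1_sig p) - snd (proj1_sig q)).

(* the inclusion of M0 (clamped outside [0,1]^2, where it is irrelevant) *)
Definition U0map (r s : R) : U0car :=
  exist _ (clamp r, clamp s) (conj (clamp_in r) (clamp_in s)).

Definition U0 : sqdata := SqData U0car U0dist U0map.

(* Main.v *)
Require Import Defs.
From Stdlib Require Import Reals Lra Lia Relations ClassicalEpsilon.
From Stdlib Require Import FunctionalExtensionality PropExtensionality ProofIrrelevance.
From Coquelicot Require Import Coquelicot.
Open Scope R_scope.

Ltac rabs := repeat match goal with
  | |- context [Rabs ?x] => destruct (Rcase_abs x);
       [rewrite (Rabs_left x) by assumption | rewrite (Rabs_right x) by assumption]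
  | H : context [Rabs ?x] |- _ => destruct (Rcase_abs x);
       [rewrite (Rabs_left x) in H by assumption | rewrite (Rabs_right x) in H by assumption]
  end.

Lemma sig_ext {A : Type} {P : A -> Prop} (u v : {x | P x}) :
  proj1_sig u = proj1_sig v -> u = v.
Proof. destruct u as [x p], v as [y q]; simpl; intros ->. f_equal. apply proof_irrelevance. Qed.


Lemma m_refl X : IsSquaMS X -> forall x, sq_dist X x x = 0.
Proof. intros [[Hd _] _] x. apply Hd; reflexivity. Qed.
Lemma m_sym X : IsSquaMS X -> forall x y, sq_dist X x y = sq_dist X y x.
Proof. intros [[_ [Hs _]] _]. auto. Qed.
Lemma m_tri X : IsSquaMS X -> forall x y z, sq_dist X x z <= sq_dist X x y + sq_dist X y z.
Proof. intros [[_ [_ Ht]] _]. auto. Qed.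
Lemma m_nonneg X : IsSquaMS X -> forall x y, 0 <= sq_dist X x y.
Proof. intros H x y. pose proof (m_tri X H x y x). rewrite (m_refl X H x), (m_sym X H y x) in H0. lra. Qed.
Lemma m_le2 X : IsSquaMS X -> forall x y, sq_dist X x y <= 2.
Proof. intros [_ [H _]]. auto. Qed.
Lemma m_eq X : IsSquaMS X -> forall x y, sq_dist X x y = 0 -> x = y.
Proof. intros [[Hd _] _] x y. apply Hd. Qed.

Lemma teqv_refl X a : teqv X a a. Proof. apply rst_refl. Qed.
Lemma teqv_sym X a b : teqv X a b -> teqv X b a. Proof. apply rst_sym. Qed.
Lemma teqv_trans X a b c : teqv X a b -> teqv X b c -> teqv X a c.
Proof. intros; eapply rst_trans; eauto. Qed.

Lemma tcls_eq X a b : teqv X a b -> tcls X a = tcls X b.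
Proof.
  intros H. apply sig_ext; simpl. extensionality c. apply propositional_extensionality.
  split; intro H1; [eapply teqv_trans; [apply teqv_sym|]; eauto | eapply teqv_trans; eauto].
Qed.

Lemma trep_spec X (A : tcar X) : forall b, proj1_sig A b <-> teqv X (trep X A) b.
Proof. intro b. unfold trep. destruct (constructive_indefinite_description _ _) as [a Ha]. simpl. apply Ha. Qed.

Lemma trep_in X (A : tcar X) : proj1_sig A (trep X A).
Proof. apply trep_spec, teqv_refl. Qed.

Lemma tcls_trep X (A : tcar X) : tcls X (trep X A) = A.
Proof.
  apply sig_ext; simpl. extensionality b. apply propositional_extensionality.
  symmetry. apply trep_spec.
Qed.

Lemma trep_tcls X a : teqv X a (trep X (tcls X a)).
Proof. exact (trep_in X (tcls X a)). Qed.

Lemma in_teqv X (A : tcar X) a b : proj1_sig A a -> proj1_sig A b -> teqv X a b.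
Proof.
  intros Ha Hb. apply trep_spec in Ha. apply trep_spec in Hb.
  eapply teqv_trans; [apply teqv_sym|]; eauto.
Qed.

Definition presS (X Y : sqdata) (f : sq_car X -> sq_car Y) :=
  forall r s, inM0 r s -> f (sq_map X r s) = sq_map Y r s.
Definition shortm (X Y : sqdata) (f : sq_car X -> sq_car Y) :=
  forall x y, sq_dist Y (f x) (f y) <= sq_dist X x y.
Definition pmap {X Y : sqdata} (f : sq_car X -> sq_car Y) (a : Defs.N * sq_car X) : Defs.N * sq_car Y :=
  (fst a, f (snd a)).

Lemma teqv_map X Y f : presS X Y f -> forall a b, teqv X a b -> teqv Y (pmap f a) (pmap f b).
Proof.
  intros Hf a b H; induction H.
  - apply rst_step. destruct H as (r&s&t&u&H1&H2&H3&H4&H5&H6&H7).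
    exists r, s, t, u. unfold pmap; simpl. rewrite H3, H4, Hf, Hf by auto.
    exact (conj H1 (conj H2 (conj eq_refl (conj eq_refl (conj H5 (conj H6 H7)))))).
  - apply teqv_refl.
  - apply teqv_sym; auto.
  - eapply teqv_trans; eauto.
Qed.

Lemma tensor_map_tcls X Y f a : presS X Y f ->
  tensor_map X Y f (tcls X a) = tcls Y (pmap f a).
Proof.
  intros Hf. unfold tensor_map. apply tcls_eq.
  change (teqv Y (pmap f (trep X (tcls X a))) (pmap f a)).
  apply teqv_map; auto. apply teqv_sym, trep_tcls.
Qed.

Lemma tensor_map_comp X Y Z f g A : presS Y Z g ->
  tensor_map Y Z g (tensor_map X Y f A) = tensor_map X Z (fun x => g (f x)) A.
Proof.
  intros Hg. change (tensor_map X Y f A) with (tcls Y (pmap f (trep X A))).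
  rewrite tensor_map_tcls by auto. reflexivity.
Qed.

Lemma tensor_map_id X A : tensor_map X X (fun x => x) A = A.
Proof.
  unfold tensor_map. rewrite <- surjective_pairing. apply tcls_trep.
Qed.

Lemma glb_props (S : R -> Prop) (L e0 : R) : S e0 -> (forall e, S e -> L <= e) ->
  L <= real (Glb_Rbar S) /\ (forall e, S e -> real (Glb_Rbar S) <= e).
Proof.
  intros H0 HL. destruct (Glb_Rbar_correct S) as [Hlb Hglb].
  assert (H1 : Rbar_le L (Glb_Rbar S)) by (apply Hglb; intros x Hx; simpl; apply HL; auto).
  assert (H2 : Rbar_le (Glb_Rbar S) e0) by (apply Hlb; auto).
  destruct (Glb_Rbar S) as [g| |]; simpl in *; try contradiction.
  split; [auto|]. intros e He. specialize (Hlb e He). simpl in Hlb. auto.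
Qed.

Lemma tbase_nonneg X : IsSquaMS X -> forall a b, 0 <= tbase X a b.
Proof.
  intros H a b. unfold tbase. destruct N_eq_dec; [|lra].
  pose proof (m_nonneg X H (snd a) (snd b)). lra.
Qed.

Lemma tchain_nonneg X : IsSquaMS X -> forall a b e, tchain X a b e -> 0 <= e.
Proof.
  intros H a b e Hc. induction Hc.
  - apply tbase_nonneg; auto.
  - pose proof (tbase_nonneg X H a b). lra.
Qed.

Lemma tdist_le X (H : IsSquaMS X) (A B : tcar X) a b e :
  proj1_sig A a -> proj1_sig B b -> tchain X a b e -> tdist X A B <= e.
Proof.
  intros Ha Hb Hc. unfold tdist.
  apply (glb_props _ 0 e).
  - exists a, b; auto.
  - intros e' (a'&b'&_&_&Hc'). eapply tchain_nonneg; eauto.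
  - exists a, b; auto.
Qed.

Lemma tdist_ge X (A B : tcar X) L :
  (forall a b e, proj1_sig A a -> proj1_sig B b -> tchain X a b e -> L <= e) ->
  L <= tdist X A B.
Proof.
  intros HL. unfold tdist.
  apply (glb_props _ L (tbase X (trep X A) (trep X B))).
  - exists (trep X A), (trep X B). split; [apply trep_in|]. split; [apply trep_in|]. constructor.
  - intros e (a&b&Ha&Hb&Hc). eauto.
Qed.

Lemma tdist_cell X (H : IsSquaMS X) n u v :
  tdist X (tcls X (n, u)) (tcls X (n, v)) <= sq_dist X u v / 3.
Proof.
  eapply Rle_trans.
  - apply (tdist_le X H _ _ (n, u) (n, v)); [apply teqv_refl | apply teqv_refl | constructor].
  - unfold tbase; simpl. destruct (N_eq_dec n n); [lra | congruence].
Qed.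

Lemma tchain_map X Y f : shortm X Y f -> presS X Y f ->
  forall a b e, tchain X a b e -> exists e', e' <= e /\ tchain Y (pmap f a) (pmap f b) e'.
Proof.
  intros Hs Hf a b e Hc. induction Hc.
  - exists (tbase Y (pmap f a) (pmap f b)). split; [|constructor].
    unfold tbase, pmap; simpl. destruct N_eq_dec; [|lra].
    specialize (Hs (snd a) (snd b)). lra.
  - destruct IHHc as [e' [He' Hc']].
    exists (tbase Y (pmap f a) (pmap f b) + e'). split.
    + assert (tbase Y (pmap f a) (pmap f b) <= tbase X a b).
      { unfold tbase, pmap; simpl. destruct N_eq_dec; [|lra].
        specialize (Hs (snd a) (snd b)). lra. }
      lra.
    + eapply tch_step; [apply teqv_map; eauto | eauto].
Qed.

Lemma tdist_map X Y (HY : IsSquaMS Y) f : shortm X Y f -> presS X Y f ->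
  forall A B, tdist Y (tensor_map X Y f A) (tensor_map X Y f B) <= tdist X A B.
Proof.
  intros Hs Hf A B. apply tdist_ge. intros a b e Ha Hb Hc.
  destruct (tchain_map X Y f Hs Hf a b e Hc) as [e' [He' Hc']].
  eapply Rle_trans; [|apply He'].
  apply (tdist_le Y HY _ _ (pmap f a) (pmap f b)); auto.
  - change (teqv Y (pmap f (trep X A)) (pmap f a)). apply teqv_map; auto.
    apply trep_spec; auto.
  - change (teqv Y (pmap f (trep X B)) (pmap f b)). apply teqv_map; auto.
    apply trep_spec; auto.
Qed.


Lemma clamp_id x : inI x -> clamp x = x.
Proof. unfold inI, clamp, Rmax, Rmin; intros; repeat destruct Rle_dec; lra. Qed.

Lemma inM0_I r s : inM0 r s -> inI r /\ inI s.
Proof. intros [H1 [H2 _]]; auto. Qed.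

Lemma inM0_edge i r : (i = 0 \/ i = 1) -> inI r -> inM0 i r /\ inM0 r i.
Proof. intros Hi Hr. unfold inM0, inI in *. destruct Hi; subst; repeat split; lra. Qed.

Lemma U0_sq : IsSquaMS U0.
Proof.
  refine (conj (conj _ (conj _ _)) (conj _ (conj _ (conj _ _)))); simpl; unfold U0dist.
  - intros x y; split; [|intros ->; rabs; lra].
    destruct x as [[x1 x2] hx], y as [[y1 y2] hy]; simpl. intros H. apply sig_ext; simpl.
    assert (x1 = y1) by (rabs; lra). assert (x2 = y2) by (rabs; lra). subst; auto.
  - intros; rabs; lra.
  - intros; rabs; lra.
  - intros [[x1 x2] [h1 h2]] [[y1 y2] [k1 k2]]; unfold inI in *; simpl in *; rabs; lra.
  - intros r s t u H1 H2 H. apply (f_equal (@proj1_sig _ _)) in H; simpl in H.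
    injection H. destruct (inM0_I r s H1), (inM0_I t u H2). rewrite !clamp_id by auto. auto.
  - intros i r s Hi Hr Hs. simpl.
    assert (inI i) by (unfold inI; destruct Hi; lra).
    rewrite !clamp_id by auto. split; rabs; lra.
  - intros r s t u H1 H2. simpl. destruct (inM0_I r s H1), (inM0_I t u H2).
    rewrite !clamp_id by auto. lra.
Qed.

Definition phiR (n : three) (x : R) : R := (t2R n + x) / 3.

Lemma phiR_in n x : inI x -> inI (phiR n x).
Proof. destruct n; unfold inI, phiR, t2R; lra. Qed.

Definition ux (u : U0car) : R := fst (proj1_sig u).
Definition uy (u : U0car) : R := snd (proj1_sig u).
Lemma ux_in u : inI (ux u). Proof. exact (proj1 (proj2_sig u)). Qed.
Lemma uy_in u : inI (uy u). Proof. exact (proj2 (proj2_sig u)). Qed.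

Definition phi (a : Defs.N * U0car) : U0car :=
  exist _ (phiR (fst (fst a)) (ux (snd a)), phiR (snd (fst a)) (uy (snd a)))
    (conj (phiR_in _ _ (ux_in (snd a))) (phiR_in _ _ (uy_in (snd a)))).

Lemma U0_eq (u v : U0car) : ux u = ux v -> uy u = uy v -> u = v.
Proof.
  destruct u as [[a b] p], v as [[c d] q]; unfold ux, uy; simpl; intros -> ->.
  apply sig_ext; reflexivity.
Qed.

Lemma ux_U0map r s : inI r -> ux (U0map r s) = r.
Proof. intros; unfold ux; simpl; apply clamp_id; auto. Qed.
Lemma uy_U0map r s : inI s -> uy (U0map r s) = s.
Proof. intros; unfold uy; simpl; apply clamp_id; auto. Qed.

Lemma ux_phi a : ux (phi a) = phiR (fst (fst a)) (ux (snd a)).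
Proof. reflexivity. Qed.
Lemma uy_phi a : uy (phi a) = phiR (snd (fst a)) (uy (snd a)).
Proof. reflexivity. Qed.

Lemma phi_teqv a b : teqv U0 a b -> phi a = phi b.
Proof.
  intros H; induction H; try congruence.
  destruct H as (r&s&t&u&H1&H2&H3&H4&H5&H6&H7).
  destruct (inM0_I r s H1), (inM0_I t u H2). change (sq_car U0) with U0car in *.
  apply U0_eq; rewrite ?ux_phi, ?uy_phi, H3, H4; unfold phiR;
  [rewrite !ux_U0map by auto | rewrite !uy_U0map by auto]; lra.
Qed.

Definition alphaU (A : tcar U0) : U0car := phi (trep U0 A).

Lemma alphaU_tcls a : alphaU (tcls U0 a) = phi a.
Proof. unfold alphaU. symmetry. apply phi_teqv, trep_tcls. Qed.

Lemma tidx_in r : inI r -> inI (3 * r - t2R (tidx r)).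
Proof. unfold tidx, inI; intros; repeat destruct Rlt_dec; simpl; lra. Qed.

Lemma tidx_M0 r s : inM0 r s -> inM0 (3 * r - t2R (tidx r)) (3 * s - t2R (tidx s)).
Proof.
  intros [Hr [Hs Hd]]. split; [apply tidx_in; auto|]. split; [apply tidx_in; auto|].
  destruct Hd as [ -> | [ -> | [ -> | -> ]]]; unfold tidx; repeat destruct Rlt_dec; simpl;
  try (left; lra); try (right; left; lra); try (right; right; left; lra);
  try (right; right; right; lra); lra.
Qed.

Lemma tidx_eq r : (t2R (tidx r) + (3 * r - t2R (tidx r))) / 3 = r.
Proof. field. Qed.

Lemma phi_dist (a b : Defs.N * U0car) : U0dist (phi a) (phi b) <= tbase U0 a b.
Proof.
  unfold tbase. destruct N_eq_dec as [e|e].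
  - change (U0dist (phi a) (phi b)) with (Rabs (ux (phi a) - ux (phi b)) + Rabs (uy (phi a) - uy (phi b))).
    change (sq_dist U0 (snd a) (snd b)) with (Rabs (ux (snd a) - ux (snd b)) + Rabs (uy (snd a) - uy (snd b))).
    rewrite !ux_phi, !uy_phi. unfold phiR. destruct a as [na pa], b as [nb pb]; simpl in *; subst. rabs; lra.
  - pose proof (proj2_sig (phi a)) as [h1 h2]. pose proof (proj2_sig (phi b)) as [k1 k2].
    unfold U0dist, inI in *. rabs; lra.
Qed.

Lemma chain_phi a b e : tchain U0 a b e -> U0dist (phi a) (phi b) <= e.
Proof.
  intros Hc; induction Hc.
  - apply phi_dist.
  - pose proof (proj2 (proj2 (proj1 U0_sq)) (phi a) (phi b') (phi c)). simpl in H0.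
    pose proof (phi_dist a b). rewrite (phi_teqv _ _ H) in H1. lra.
Qed.

Lemma alphaU_hom : is_hom (tensor U0) U0 alphaU.
Proof.
  split.
  - intros A B; simpl. apply tdist_ge. intros a b e Ha Hb Hc.
    unfold alphaU. rewrite (phi_teqv _ _ (proj1 (trep_spec _ A a) Ha)).
    rewrite (phi_teqv _ _ (proj1 (trep_spec _ B b) Hb)). apply chain_phi; auto.
  - intros r s H. simpl. unfold tsqm. rewrite alphaU_tcls.
    destruct (inM0_I r s H). pose proof (tidx_M0 r s H) as H'. destruct (inM0_I _ _ H').
    apply U0_eq; rewrite ?ux_phi, ?uy_phi; simpl.
    + rewrite ux_U0map, ux_U0map by auto. unfold phiR. apply tidx_eq.
    + rewrite uy_U0map, uy_U0map by auto. unfold phiR. apply tidx_eq.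
Qed.


Definition subcar (W : sqdata) (P : sq_car W -> Prop) := {w : sq_car W | P w}.

Lemma inM0_00 : inM0 0 0.
Proof. unfold inM0, inI. split; [lra|]. split; [lra|]. left; auto. Qed.

Definition subS W P (HS : forall r s, inM0 r s -> P (sq_map W r s)) (r s : R) : subcar W P :=
  match excluded_middle_informative (inM0 r s) with
  | left h => exist _ (sq_map W r s) (HS r s h)
  | right _ => exist _ (sq_map W 0 0) (HS 0 0 inM0_00)
  end.

Definition subW W P HS : sqdata :=
  SqData (subcar W P) (fun x y => sq_dist W (proj1_sig x) (proj1_sig y)) (subS W P HS).

Lemma subS_val W P HS r s : inM0 r s -> proj1_sig (subS W P HS r s) = sq_map W r s.
Proof. intros H. unfold subS. destruct excluded_middle_informative; [reflexivity | contradiction]. Qed.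

Lemma subW_sq W P HS : IsSquaMS W -> IsSquaMS (subW W P HS).
Proof.
  intros HW. pose proof HW as [[Hd [Hs Ht]] [Hle2 [Hinj [Hsq1 Hsq2]]]].
  refine (conj (conj _ (conj _ _)) (conj _ (conj _ (conj _ _)))); simpl.
  - intros x y; split; [intros H; apply sig_ext; apply Hd; auto | intros ->; apply Hd; auto].
  - auto.
  - auto.
  - auto.
  - intros r s t u H1 H2 H. apply Hinj; auto.
    rewrite <- (subS_val W P HS r s H1), <- (subS_val W P HS t u H2), H. reflexivity.
  - intros i r s Hi Hr Hs'. destruct (inM0_edge i r Hi Hr), (inM0_edge i s Hi Hs').
    rewrite !subS_val by auto. apply Hsq1; auto.
  - intros r s t u H1 H2. rewrite !subS_val by auto. apply Hsq2; auto.
Qed.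

Definition alphaY W (lam : tcar W -> sq_car W) P HS
  (HL : forall n w, P w -> P (lam (tcls W (n, w)))) (z : tcar (subW W P HS)) : subcar W P :=
  exist _ (lam (tensor_map (subW W P HS) W (@proj1_sig _ _) z))
    (HL _ _ (proj2_sig (snd (trep _ z)))).

Lemma incl_presS W P HS : presS (subW W P HS) W (@proj1_sig _ _).
Proof. intros r s H. apply subS_val; auto. Qed.

Lemma alphaY_hom W lam P HS HL : IsSquaMS W -> is_hom (tensor W) W lam ->
  is_hom (tensor (subW W P HS)) (subW W P HS) (alphaY W lam P HS HL).
Proof.
  intros HW [Hl1 Hl2]. split.
  - intros A B. simpl. eapply Rle_trans; [apply Hl1|]. simpl.
    apply tdist_map; auto.
    + intros x y; simpl; lra.
    + apply incl_presS.
  - intros r s H. apply sig_ext. simpl. rewrite subS_val by auto.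
    unfold tsqm. rewrite tensor_map_tcls by apply incl_presS. unfold pmap; simpl.
    rewrite subS_val by (apply tidx_M0; auto).
    change (lam (tsqm W r s) = sq_map W r s). apply Hl2; auto.
Qed.

Lemma IP W lam (HW : IsSquaMS W) (Hini : is_initial_algebra W lam) (P : sq_car W -> Prop)
  (HS : forall r s, inM0 r s -> P (sq_map W r s))
  (HL : forall n w, P w -> P (lam (tcls W (n, w)))) : forall w, P w.
Proof.
  destruct Hini as [Hlam Hu].
  destruct (Hu (subW W P HS) (alphaY W lam P HS HL) (subW_sq W P HS HW)
     (alphaY_hom W lam P HS HL HW Hlam)) as [k [[Hk1 Hk2] _]].
  destruct (Hu W lam HW Hlam) as [h0 [_ Huniq]].
  assert (E1 : h0 = fun w => w).
  { apply Huniq. split; [split; [intros; simpl; lra | intros; auto] |].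
    intros z. rewrite tensor_map_id; auto. }
  assert (E2 : h0 = fun w => proj1_sig (k w)).
  { apply Huniq. split; [split|].
    - intros x y. apply (proj1 Hk1).
    - intros r s H. rewrite (proj2 Hk1 r s H). apply subS_val; auto.
    - intros z. rewrite Hk2. simpl. rewrite tensor_map_comp by apply incl_presS. reflexivity. }
  intros w. pose proof (f_equal (fun g => g w) (eq_trans (eq_sym E1) E2)) as E. simpl in E.
  rewrite E. apply proj2_sig.
Qed.


Ltac ssq := first [left; reflexivity | right; reflexivity | unfold inI in *; lra].

Lemma three_close a b x y : inI x -> inI y -> t2R a + x = t2R b + y ->
  a = b \/ Rabs (t2R a - t2R b) = 1.
Proof.
  intros Hx Hy H. destruct a, b; unfold inI in *; simpl in *;
  first [left; reflexivity | right; rabs; lra | exfalso; lra].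
Qed.

Lemma tidx_phi_end c e : inI e -> (phiR c e = 0 \/ phiR c e = 1) -> tidx (phiR c e) = c.
Proof.
  intros He [H|H]; destruct c; unfold tidx, phiR, inI in *; simpl in *;
  repeat destruct Rlt_dec; first [reflexivity | lra].
Qed.


Definition succ3 (a : three) : three := match a with T0 => T1 | T1 => T2 | T2 => T2 end.
Definition pred3 (a : three) : three := match a with T0 => T0 | T1 => T0 | T2 => T1 end.
Definition nd (a b : three) : nat :=
  match a, b with
  | T0, T0 => 0 | T0, T1 => 1 | T0, T2 => 2
  | T1, T0 => 1 | T1, T1 => 0 | T1, T2 => 1
  | T2, T0 => 2 | T2, T1 => 1 | T2, T2 => 0 end.
Definition dist3 (c m : Defs.N) : nat := (nd (fst c) (fst m) + nd (snd c) (snd m))%nat.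

Lemma succ3_prop a b : t2R a < t2R b ->
  t2R (succ3 a) = t2R a + 1 /\ t2R a + 1 <= t2R b /\ (nd (succ3 a) b < nd a b)%nat.
Proof. destruct a, b; simpl; intros; try lra; repeat split; try lra; lia. Qed.

Lemma pred3_prop a b : t2R b < t2R a ->
  t2R (pred3 a) = t2R a - 1 /\ t2R b + 1 <= t2R a /\ (nd (pred3 a) b < nd a b)%nat.
Proof. destruct a, b; simpl; intros; try lra; repeat split; try lra; lia. Qed.

Lemma t2R_inj a b : t2R a = t2R b -> a = b.
Proof. destruct a, b; simpl; intros; try lra; reflexivity. Qed.

Lemma dist3_0 c m : dist3 c m = 0%nat -> c = m.
Proof. destruct c as [[] []], m as [[] []]; unfold dist3; simpl; intros; try lia; reflexivity. Qed.

Section Geo.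
Variable W : sqdata.
Variable lam : tcar W -> sq_car W.
Hypothesis HW : IsSquaMS W.
Hypothesis Hini : is_initial_algebra W lam.
Variable h : sq_car W -> U0car.
Hypothesis Hh : is_hom W U0 h.
Hypothesis Hhl : forall z, h (lam z) = alphaU (tensor_map W U0 h z).

Definition pt (c : Defs.N) (w : sq_car W) : sq_car W := lam (tcls W (c, w)).
Local Notation d := (sq_dist W).
Local Notation S := (sq_map W).
Definition hx w := ux (h w).
Definition hy w := uy (h w).
Definition Dhd x y := Rabs (hx x - hx y) + Rabs (hy x - hy y).
Local Notation Dh := Dhd.

Lemma hx_in w : inI (hx w). Proof. apply ux_in. Qed.
Lemma hy_in w : inI (hy w). Proof. apply uy_in. Qed.

Lemma hS r s : inM0 r s -> hx (S r s) = r /\ hy (S r s) = s.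
Proof.
  intros H. destruct (inM0_I r s H). unfold hx, hy. rewrite (proj2 Hh r s H). simpl.
  split; [apply ux_U0map | apply uy_U0map]; auto.
Qed.

Lemma hpt c w : hx (pt c w) = phiR (fst c) (hx w) /\ hy (pt c w) = phiR (snd c) (hy w).
Proof.
  unfold hx, hy, pt. rewrite Hhl, tensor_map_tcls by (exact (proj2 Hh)).
  rewrite alphaU_tcls. split; reflexivity.
Qed.

Lemma h_short x y : Dh x y <= d x y.
Proof. apply (proj1 Hh). Qed.

Lemma Dh_nonneg x y : 0 <= Dh x y.
Proof. unfold Dhd. pose proof (Rabs_pos (hx x - hx y)). pose proof (Rabs_pos (hy x - hy y)). lra. Qed.

Lemma Dh_sym x y : Dh x y = Dh y x.
Proof. unfold Dhd. rewrite (Rabs_minus_sym (hx x)), (Rabs_minus_sym (hy x)). auto. Qed.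

Lemma Dh_tri x y z : Dh x z <= Dh x y + Dh y z.
Proof. unfold Dhd. rabs; lra. Qed.

Lemma dpt c u v : d (pt c u) (pt c v) <= d u v / 3.
Proof.
  unfold pt. eapply Rle_trans; [apply (proj1 (proj1 Hini))|]. apply tdist_cell; auto.
Qed.

Lemma lamS r s : inM0 r s -> lam (tsqm W r s) = S r s.
Proof. intros H. apply (proj2 (proj1 Hini)); auto. Qed.

Lemma S_pt r s : inM0 r s ->
  S r s = pt (tidx r, tidx s) (S (3 * r - t2R (tidx r)) (3 * s - t2R (tidx s))).
Proof. intros H. rewrite <- lamS by auto. reflexivity. Qed.

Lemma decomp w : exists c w', w = pt c w'.
Proof.
  apply (IP W lam HW Hini (fun w => exists c w', w = pt c w')).
  - intros r s H. rewrite S_pt by auto. eauto.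
  - intros n w' _. exists n, w'. reflexivity.
Qed.

Lemma pt_S_eq c c' e1 e2 f1 f2 : inM0 e1 e2 -> inM0 f1 f2 ->
  phiR (fst c) e1 = phiR (fst c') f1 -> phiR (snd c) e2 = phiR (snd c') f2 ->
  (fst c = fst c' \/ snd c = snd c') -> pt c (S e1 e2) = pt c' (S f1 f2).
Proof.
  intros He Hf E1 E2 Hsh. destruct (inM0_I _ _ He), (inM0_I _ _ Hf).
  destruct c as [cx cy], c' as [dx dy]; simpl in *. unfold phiR in E1, E2.
  assert (A1 : t2R cx + e1 = t2R dx + f1) by lra.
  assert (A2 : t2R cy + e2 = t2R dy + f2) by lra.
  destruct (N_eq_dec (cx, cy) (dx, dy)) as [Eq|Ne].
  - injection Eq as -> ->. assert (e1 = f1) by lra. assert (e2 = f2) by lra. subst. reflexivity.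
  - unfold pt. f_equal. apply tcls_eq. apply rst_step.
    exists e1, e2, f1, f2. simpl.
    refine (conj He (conj Hf (conj eq_refl (conj eq_refl (conj _ (conj _ _)))))); try lra.
    unfold adjacent; simpl. destruct Hsh as [->| ->].
    + left. split; auto. destruct (three_close cy dy e2 f2) as [->|]; auto. congruence.
    + right. split; auto. destruct (three_close cx dx e1 f1) as [->|]; auto. congruence.
Qed.

Lemma S_eq_pt p1 p2 cx cy e1 e2 : inM0 p1 p2 -> inM0 e1 e2 ->
  p1 = phiR cx e1 -> p2 = phiR cy e2 -> S p1 p2 = pt (cx, cy) (S e1 e2).
Proof.
  intros Hp He E1 E2. rewrite S_pt by auto. destruct (inM0_I _ _ He).
  apply pt_S_eq; auto.
  - apply tidx_M0; auto.
  - simpl. unfold phiR. rewrite tidx_eq. auto.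
  - simpl. unfold phiR. rewrite tidx_eq. auto.
  - simpl. rewrite E1, E2 in *. destruct Hp as [_ [_ [Hq|[Hq|[Hq|Hq]]]]].
    + left. apply tidx_phi_end; auto.
    + left. apply tidx_phi_end; auto.
    + right. apply tidx_phi_end; auto.
    + right. apply tidx_phi_end; auto.
Qed.

Lemma ex_d i r s : (i = 0 \/ i = 1) -> inI r -> inI s -> d (S i r) (S i s) = Rabs (s - r).
Proof. intros Hi Hr Hs; exact (proj1 (proj1 (proj2 (proj2 (proj2 HW))) i r s Hi Hr Hs)). Qed.
Lemma ey_d i r s : (i = 0 \/ i = 1) -> inI r -> inI s -> d (S r i) (S s i) = Rabs (s - r).
Proof. intros Hi Hr Hs; exact (proj2 (proj1 (proj2 (proj2 (proj2 HW))) i r s Hi Hr Hs)). Qed.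

Lemma inI_0 : inI 0. Proof. unfold inI; lra. Qed.
Lemma inI_1 : inI 1. Proof. unfold inI; lra. Qed.

Lemma M0_x i t : (i = 0 \/ i = 1) -> inI t -> inM0 i t.
Proof. intros Hi Ht; exact (proj1 (inM0_edge i t Hi Ht)). Qed.
Lemma M0_y i t : (i = 0 \/ i = 1) -> inI t -> inM0 t i.
Proof. intros Hi Ht; exact (proj2 (inM0_edge i t Hi Ht)). Qed.

Definition Th t := d (S 0 t) (S 1 t) <= 1.
Definition Tv t := d (S t 0) (S t 1) <= 1.

Lemma Th_0 : Th 0.
Proof. unfold Th. rewrite ey_d by ssq. rabs; lra. Qed.
Lemma Tv_0 : Tv 0.
Proof. unfold Tv. rewrite ex_d by ssq. rabs; lra. Qed.

Lemma Th_step b t : inI t -> Th t -> Th (phiR b t).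
Proof.
  intros Ht HT. unfold Th in *.
  assert (Hb : inI (phiR b t)) by (apply phiR_in; auto).
  rewrite (S_eq_pt 0 (phiR b t) T0 b 0 t) by (try apply M0_x; try ssq; unfold phiR; simpl; lra).
  rewrite (S_eq_pt 1 (phiR b t) T2 b 1 t) by (try apply M0_x; try ssq; unfold phiR; simpl; lra).
  assert (E1 : pt (T0, b) (S 1 t) = pt (T1, b) (S 0 t))
    by (apply pt_S_eq; try apply M0_x; try ssq; try (unfold phiR; simpl; lra); right; reflexivity).
  assert (E2 : pt (T1, b) (S 1 t) = pt (T2, b) (S 0 t))
    by (apply pt_S_eq; try apply M0_x; try ssq; try (unfold phiR; simpl; lra); right; reflexivity).
  pose proof (m_tri W HW (pt (T0, b) (S 0 t)) (pt (T0, b) (S 1 t)) (pt (T2, b) (S 1 t))).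
  pose proof (m_tri W HW (pt (T1, b) (S 0 t)) (pt (T1, b) (S 1 t)) (pt (T2, b) (S 1 t))).
  pose proof (dpt (T0, b) (S 0 t) (S 1 t)).
  pose proof (dpt (T1, b) (S 0 t) (S 1 t)).
  pose proof (dpt (T2, b) (S 0 t) (S 1 t)).
  rewrite E1 in *. rewrite E2 in *. lra.
Qed.

Lemma Tv_step b t : inI t -> Tv t -> Tv (phiR b t).
Proof.
  intros Ht HT. unfold Tv in *.
  assert (Hb : inI (phiR b t)) by (apply phiR_in; auto).
  rewrite (S_eq_pt (phiR b t) 0 b T0 t 0) by (try apply M0_y; try ssq; unfold phiR; simpl; lra).
  rewrite (S_eq_pt (phiR b t) 1 b T2 t 1) by (try apply M0_y; try ssq; unfold phiR; simpl; lra).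
  assert (E1 : pt (b, T0) (S t 1) = pt (b, T1) (S t 0))
    by (apply pt_S_eq; try apply M0_y; try ssq; try (unfold phiR; simpl; lra); left; reflexivity).
  assert (E2 : pt (b, T1) (S t 1) = pt (b, T2) (S t 0))
    by (apply pt_S_eq; try apply M0_y; try ssq; try (unfold phiR; simpl; lra); left; reflexivity).
  pose proof (m_tri W HW (pt (b, T0) (S t 0)) (pt (b, T0) (S t 1)) (pt (b, T2) (S t 1))).
  pose proof (m_tri W HW (pt (b, T1) (S t 0)) (pt (b, T1) (S t 1)) (pt (b, T2) (S t 1))).
  pose proof (dpt (b, T0) (S t 0) (S t 1)).
  pose proof (dpt (b, T1) (S t 0) (S t 1)).
  pose proof (dpt (b, T2) (S t 0) (S t 1)).
  rewrite E1 in *. rewrite E2 in *. lra.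
Qed.


Lemma dens (Q : R -> Prop) : Q 0 -> (forall b t, inI t -> Q t -> Q (phiR b t)) ->
  forall k t, inI t -> exists tau, inI tau /\ Q tau /\ Rabs (t - tau) <= (1/3)^k.
Proof.
  intros H0 HS k. induction k; intros t Ht.
  - exists 0. split; [apply inI_0|]. split; auto. simpl. unfold inI in Ht. rabs; lra.
  - destruct (IHk (3 * t - t2R (tidx t)) (tidx_in t Ht)) as [tau [Htau [HQ Hd]]].
    exists (phiR (tidx t) tau). split; [apply phiR_in; auto|]. split; [apply HS; auto|].
    simpl. assert (E : t - phiR (tidx t) tau = (3 * t - t2R (tidx t) - tau) / 3)
      by (unfold phiR; field).
    rewrite E. rabs; lra.
Qed.

Lemma small_pow (q : R) : 0 <= q < 1 -> forall eps, 0 < eps -> exists k, q ^ k < eps.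
Proof.
  intros Hq eps He. destruct (pow_lt_1_zero q) with (y := eps) as [N HN]; auto.
  { rabs; lra. }
  exists N. specialize (HN N (le_n N)). pose proof (Rle_abs (q ^ N)). lra.
Qed.

Lemma OEh t t' : inI t -> inI t' -> d (S 0 t) (S 1 t') <= 1 + Rabs (t - t').
Proof.
  intros Ht Ht'. apply Rle_plus_epsilon. intros eps Heps.
  destruct (small_pow (1/3)) with (eps := eps/2) as [k Hk]; [lra|lra|].
  destruct (dens Th Th_0 Th_step k t Ht) as [tau [Htau [HT Hdt]]].
  pose proof (m_tri W HW (S 0 t) (S 0 tau) (S 1 t')) as T1.
  pose proof (m_tri W HW (S 0 tau) (S 1 tau) (S 1 t')) as T2.
  rewrite ex_d in T1 by ssq. rewrite ex_d in T2 by ssq. unfold Th in HT. rabs; lra.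
Qed.

Lemma OEv t t' : inI t -> inI t' -> d (S t 0) (S t' 1) <= 1 + Rabs (t - t').
Proof.
  intros Ht Ht'. apply Rle_plus_epsilon. intros eps Heps.
  destruct (small_pow (1/3)) with (eps := eps/2) as [k Hk]; [lra|lra|].
  destruct (dens Tv Tv_0 Tv_step k t Ht) as [tau [Htau [HT Hdt]]].
  pose proof (m_tri W HW (S t 0) (S tau 0) (S t' 1)) as T1.
  pose proof (m_tri W HW (S tau 0) (S tau 1) (S t' 1)) as T2.
  rewrite ey_d in T1 by ssq. rewrite ey_d in T2 by ssq. unfold Tv in HT. rabs; lra.
Qed.

Ltac corner k1 k2 :=
  eapply Rle_trans; [apply (m_tri W HW _ (sq_map W k1 k2))|];
  ((rewrite ex_d by ssq) || (rewrite ey_d by ssq));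
  ((rewrite ex_d by ssq) || (rewrite ey_d by ssq)); rabs; lra.

Ltac bl_tac := first
  [ rewrite ex_d by ssq; rabs; lra
  | rewrite ey_d by ssq; rabs; lra
  | corner constr:(0%R) constr:(0%R) | corner constr:(0%R) constr:(1%R) | corner constr:(1%R) constr:(0%R) | corner constr:(1%R) constr:(1%R)
  | eapply Rle_trans; [apply OEh; ssq|]; rabs; lra
  | rewrite (m_sym W HW); eapply Rle_trans; [apply OEh; ssq|]; rabs; lra
  | eapply Rle_trans; [apply OEv; ssq|]; rabs; lra
  | rewrite (m_sym W HW); eapply Rle_trans; [apply OEv; ssq|]; rabs; lra ].

Lemma BL a1 a2 b1 b2 : inM0 a1 a2 -> inM0 b1 b2 ->
  d (S a1 a2) (S b1 b2) <= Rabs (a1 - b1) + Rabs (a2 - b2).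
Proof.
  intros [Ha1 [Ha2 Ha]] [Hb1 [Hb2 Hb]].
  destruct Ha as [ -> | [ -> | [ -> | -> ]]]; destruct Hb as [ -> | [ -> | [ -> | -> ]]]; bl_tac.
Qed.


Definition InCell (c : Defs.N) x :=
  t2R (fst c) <= 3 * hx x <= t2R (fst c) + 1 /\ t2R (snd c) <= 3 * hy x <= t2R (snd c) + 1.
Definition LocalB (c : Defs.N) eps x :=
  forall e1 e2, inM0 e1 e2 -> d x (pt c (S e1 e2)) <= Dh x (pt c (S e1 e2)) + eps.

Lemma hpt_S c e1 e2 : inM0 e1 e2 ->
  hx (pt c (S e1 e2)) = phiR (fst c) e1 /\ hy (pt c (S e1 e2)) = phiR (snd c) e2.
Proof.
  intros H. destruct (hpt c (S e1 e2)) as [A B]. destruct (hS e1 e2 H) as [C D].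
  rewrite A, B, C, D. auto.
Qed.

Lemma InCell_pt c w : InCell c (pt c w).
Proof.
  destruct (hpt c w) as [A B]. pose proof (hx_in w). pose proof (hy_in w).
  unfold InCell. rewrite A, B. unfold phiR, inI in *. lra.
Qed.

Lemma LocalB_S c e1 e2 : inM0 e1 e2 -> LocalB c 0 (pt c (S e1 e2)).
Proof.
  intros He f1 f2 Hf. eapply Rle_trans; [apply dpt|].
  pose proof (BL e1 e2 f1 f2 He Hf).
  destruct (hpt_S c e1 e2 He), (hpt_S c f1 f2 Hf). unfold Dhd. rewrite H0, H1, H2, H3.
  unfold phiR. rabs; lra.
Qed.

Lemma step c m x y eps : InCell c x -> LocalB c eps x -> InCell m y -> c <> m ->
  exists c' f1 f2, inM0 f1 f2 /\ (dist3 c' m < dist3 c m)%nat /\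
    d x (pt c' (S f1 f2)) <= Dh x (pt c' (S f1 f2)) + eps /\
    Dh x (pt c' (S f1 f2)) + Dh (pt c' (S f1 f2)) y = Dh x y.
Proof.
  intros Hx HL Hy Hne. destruct c as [cx cy], m as [mx my].
  destruct Hx as [Hx1 Hx2], Hy as [Hy1 Hy2]; simpl in *.
  destruct (Rlt_le_dec (t2R cx) (t2R mx)) as [Lt|Ge].
  { destruct (succ3_prop cx mx Lt) as [E1 [E2 E3]].
    set (t := 3 * hy x - t2R cy).
    assert (Ht : inI t) by (unfold t, inI; lra).
    assert (Eq : pt (cx, cy) (S 1 t) = pt (succ3 cx, cy) (S 0 t)).
    { apply pt_S_eq; try (apply M0_x; ssq); simpl; unfold phiR; try lra. right; reflexivity. }
    exists (succ3 cx, cy), 0, t. split; [apply M0_x; ssq|]. split; [unfold dist3; simpl; lia|].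
    rewrite <- Eq. split; [apply HL; apply M0_x; ssq|].
    destruct (hpt_S (cx,cy) 1 t) as [Z1 Z2]; [apply M0_x; ssq|]. simpl in Z1, Z2.
    unfold Dhd. rewrite Z1, Z2. unfold phiR, t. rabs; lra. }
  destruct (Rlt_le_dec (t2R mx) (t2R cx)) as [Lt'|Ge'].
  { destruct (pred3_prop cx mx Lt') as [E1 [E2 E3]].
    set (t := 3 * hy x - t2R cy).
    assert (Ht : inI t) by (unfold t, inI; lra).
    assert (Eq : pt (cx, cy) (S 0 t) = pt (pred3 cx, cy) (S 1 t)).
    { apply pt_S_eq; try (apply M0_x; ssq); simpl; unfold phiR; try lra. right; reflexivity. }
    exists (pred3 cx, cy), 1, t. split; [apply M0_x; ssq|]. split; [unfold dist3; simpl; lia|].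
    rewrite <- Eq. split; [apply HL; apply M0_x; ssq|].
    destruct (hpt_S (cx,cy) 0 t) as [Z1 Z2]; [apply M0_x; ssq|]. simpl in Z1, Z2.
    unfold Dhd. rewrite Z1, Z2. unfold phiR, t. rabs; lra. }
  assert (Exm : cx = mx) by (apply t2R_inj; lra). subst mx.
  destruct (Rlt_le_dec (t2R cy) (t2R my)) as [Lt|Ge2].
  { destruct (succ3_prop cy my Lt) as [E1 [E2 E3]].
    set (t := 3 * hx x - t2R cx).
    assert (Ht : inI t) by (unfold t, inI; lra).
    assert (Eq : pt (cx, cy) (S t 1) = pt (cx, succ3 cy) (S t 0)).
    { apply pt_S_eq; try (apply M0_y; ssq); simpl; unfold phiR; try lra. left; reflexivity. }
    exists (cx, succ3 cy), t, 0. split; [apply M0_y; ssq|]. split; [unfold dist3; simpl; lia|].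
    rewrite <- Eq. split; [apply HL; apply M0_y; ssq|].
    destruct (hpt_S (cx,cy) t 1) as [Z1 Z2]; [apply M0_y; ssq|]. simpl in Z1, Z2.
    unfold Dhd. rewrite Z1, Z2. unfold phiR, t. rabs; lra. }
  destruct (Rlt_le_dec (t2R my) (t2R cy)) as [Lt'|Ge2'].
  { destruct (pred3_prop cy my Lt') as [E1 [E2 E3]].
    set (t := 3 * hx x - t2R cx).
    assert (Ht : inI t) by (unfold t, inI; lra).
    assert (Eq : pt (cx, cy) (S t 0) = pt (cx, pred3 cy) (S t 1)).
    { apply pt_S_eq; try (apply M0_y; ssq); simpl; unfold phiR; try lra. left; reflexivity. }
    exists (cx, pred3 cy), t, 1. split; [apply M0_y; ssq|]. split; [unfold dist3; simpl; lia|].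
    rewrite <- Eq. split; [apply HL; apply M0_y; ssq|].
    destruct (hpt_S (cx,cy) t 0) as [Z1 Z2]; [apply M0_y; ssq|]. simpl in Z1, Z2.
    unfold Dhd. rewrite Z1, Z2. unfold phiR, t. rabs; lra. }
  exfalso. apply Hne. f_equal. apply t2R_inj; lra.
Qed.

Lemma WK k : forall c m x y eps, (dist3 c m <= k)%nat ->
  (exists e1 e2, inM0 e1 e2 /\ x = pt c (S e1 e2)) ->
  InCell m y -> LocalB m eps y -> d x y <= Dh x y + eps.
Proof.
  induction k; intros c m x y eps Hk [e1 [e2 [He ->]]] Hy HL.
  - assert (c = m) by (apply dist3_0; lia). subst.
    rewrite (m_sym W HW), Dh_sym. apply HL; auto.
  - destruct (N_eq_dec c m) as [->|Hne].
    + rewrite (m_sym W HW), Dh_sym. apply HL; auto.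
    + destruct (step c m (pt c (S e1 e2)) y 0 (InCell_pt c _) (LocalB_S c e1 e2 He) Hy Hne)
        as [c' [f1 [f2 [Hf [Hlt [Hd Hg]]]]]].
      assert (Hz : d (pt c' (S f1 f2)) y <= Dh (pt c' (S f1 f2)) y + eps).
      { apply (IHk c' m); auto. lia. exists f1, f2; auto. }
      pose proof (m_tri W HW (pt c (S e1 e2)) (pt c' (S f1 f2)) y). lra.
Qed.

Lemma ISO gam : 0 <= gam -> (forall x y, d x y <= Dh x y + gam) ->
  forall x y, d x y <= Dh x y + 2 * gam / 3.
Proof.
  intros Hg H x y. destruct (decomp x) as [c [x' ->]]. destruct (decomp y) as [m [y' ->]].
  assert (Hloc : forall c0 w, LocalB c0 (gam/3) (pt c0 w)).
  { intros c0 w e1 e2 He. eapply Rle_trans; [apply dpt|]. pose proof (H w (S e1 e2)) as Hw.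
    destruct (hpt c0 w) as [A1 A2], (hpt_S c0 e1 e2 He) as [B1 B2], (hS e1 e2 He) as [C1 C2].
    unfold Dhd in *. rewrite A1, A2, B1, B2. rewrite C1, C2 in Hw. unfold phiR. rabs; lra. }
  destruct (N_eq_dec c m) as [->|Hne].
  - eapply Rle_trans; [apply dpt|]. pose proof (H x' y') as Hw.
    destruct (hpt m x') as [A1 A2], (hpt m y') as [B1 B2].
    unfold Dhd in *. rewrite A1, A2, B1, B2. unfold phiR. rabs; lra.
  - destruct (step c m (pt c x') (pt m y') (gam/3) (InCell_pt c _) (Hloc c x') (InCell_pt m _) Hne)
        as [c' [f1 [f2 [Hf [Hlt [Hd Hgd]]]]]].
    assert (Hz : d (pt c' (S f1 f2)) (pt m y') <= Dh (pt c' (S f1 f2)) (pt m y') + gam/3).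
    { apply (WK (dist3 c' m) c' m); auto. exists f1, f2; auto. apply InCell_pt. }
    pose proof (m_tri W HW (pt c x') (pt c' (S f1 f2)) (pt m y')). lra.
Qed.

Lemma ISO_n n : forall x y, d x y <= Dh x y + 2 * (2/3)^n.
Proof.
  induction n; intros x y.
  - simpl. pose proof (m_le2 W HW x y). pose proof (Dh_nonneg x y). lra.
  - replace (2 * (2/3)^(Datatypes.S n)) with (2 * (2 * (2/3)^n) / 3) by (simpl; field).
    apply ISO; auto. pose proof (pow_le (2/3) n). lra.
Qed.

Lemma isometry x y : d x y = Dh x y.
Proof.
  apply Rle_antisym; [|apply h_short].
  apply Rle_plus_epsilon. intros eps Heps.
  destruct (small_pow (2/3)) with (eps := eps/2) as [k Hk]; [lra|lra|].
  pose proof (ISO_n k x y). lra.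
Qed.

End Geo.


Lemma squeeze (u e : nat -> R) (l : R) :
  (forall n, Rabs (u n - l) <= e n) -> is_lim_seq e 0 -> is_lim_seq u l.
Proof.
  intros H He. apply is_lim_seq_le_le with (u := fun n => l - e n) (w := fun n => l + e n).
  - intros n. specialize (H n). rabs; lra.
  - replace (Finite l) with (Finite (l - 0)) by (f_equal; lra).
    apply is_lim_seq_minus'; auto. apply is_lim_seq_const.
  - replace (Finite l) with (Finite (l + 0)) by (f_equal; lra).
    apply is_lim_seq_plus'; auto. apply is_lim_seq_const.
Qed.

Lemma pow_mono q k m : 0 <= q <= 1 -> (k <= m)%nat -> q ^ m <= q ^ k.
Proof.
  intros Hq Hkm. induction Hkm.
  - lra.
  - simpl. pose proof (pow_le q m (proj1 Hq)). nra.
Qed.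

Lemma lim_in (u : nat -> R) (l : R) : (forall n, inI (u n)) -> is_lim_seq u l -> inI l.
Proof.
  intros H Hl. split.
  - pose proof (is_lim_seq_le (fun _ => 0) u 0 l (fun n => proj1 (H n)) (is_lim_seq_const 0) Hl).
    simpl in H0. auto.
  - pose proof (is_lim_seq_le u (fun _ => 1) l 1 (fun n => proj2 (H n)) Hl (is_lim_seq_const 1)).
    simpl in H0. auto.
Qed.

Section Comp.
Variable W : sqdata.
Variable lam : tcar W -> sq_car W.
Hypothesis HW : IsSquaMS W.
Hypothesis Hini : is_initial_algebra W lam.
Variable h : sq_car W -> U0car.
Hypothesis Hh : is_hom W U0 h.
Hypothesis Hhl : forall z, h (lam z) = alphaU (tensor_map W U0 h z).

Local Notation d := (sq_dist W).
Local Notation S := (sq_map W).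
Local Notation hx := (hx W h).
Local Notation hy := (hy W h).
Local Notation Dh := (Dhd W h).

Lemma iso x y : d x y = Dh x y.
Proof. exact (isometry W lam HW Hini h Hh Hhl x y). Qed.

Lemma dens_h k : forall u : U0car, exists w, Rabs (hx w - ux u) + Rabs (hy w - uy u) <= 2 * (1/3)^k.
Proof.
  induction k; intros u.
  - exists (S 0 0). destruct (hS W h Hh 0 0 inM0_00) as [A B]. rewrite A, B.
    pose proof (ux_in u). pose proof (uy_in u). unfold inI in *. simpl. rabs; lra.
  - pose (u' := exist (fun p : R * R => inI (fst p) /\ inI (snd p))
                  (3 * ux u - t2R (tidx (ux u)), 3 * uy u - t2R (tidx (uy u)))
                  (conj (tidx_in _ (ux_in u)) (tidx_in _ (uy_in u))) : U0car).
    destruct (IHk u') as [w' Hw'].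
    exists (pt W lam (tidx (ux u), tidx (uy u)) w').
    destruct (hpt W lam h Hh Hhl (tidx (ux u), tidx (uy u)) w') as [A B]. rewrite A, B.
    simpl fst; simpl snd.
    assert (X1 : ux u' = 3 * ux u - t2R (tidx (ux u))) by reflexivity.
    assert (X2 : uy u' = 3 * uy u - t2R (tidx (uy u))) by reflexivity.
    rewrite X1, X2 in Hw'.
    unfold phiR. simpl pow.
    assert (E1 : (t2R (tidx (ux u)) + hx w') / 3 - ux u
                 = (hx w' - (3 * ux u - t2R (tidx (ux u)))) / 3) by field.
    assert (E2 : (t2R (tidx (uy u)) + hy w') / 3 - uy u
                 = (hy w' - (3 * uy u - t2R (tidx (uy u)))) / 3) by field.
    rewrite E1, E2. rabs; lra.
Qed.

Lemma crep_spec (A : ccar W) : Defs.cauchy W (crep W A) /\ forall v, proj1_sig A v <-> ceqv W (crep W A) v.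
Proof. unfold crep. destruct (constructive_indefinite_description _ _) as [a Ha]. simpl. exact Ha. Qed.

Lemma ceqv_refl u : Defs.cauchy W u -> ceqv W u u.
Proof.
  intros Hu. split; [auto|split; [auto|]].
  apply is_lim_seq_ext with (u := fun _ => 0); [intros; rewrite m_refl; auto|]. apply is_lim_seq_const.
Qed.

Lemma ceqv_sym u v : ceqv W u v -> ceqv W v u.
Proof.
  intros [Hu [Hv Hl]]. split; [auto|split; [auto|]].
  apply is_lim_seq_ext with (u := fun n => d (u n) (v n)); auto. intros; apply m_sym; auto.
Qed.

Lemma ceqv_trans u v w : ceqv W u v -> ceqv W v w -> ceqv W u w.
Proof.
  intros [Hu [Hv Hl1]] [_ [Hw Hl2]]. split; [auto|split; [auto|]].
  apply squeeze with (e := fun n => d (u n) (v n) + d (v n) (w n)).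
  - intros n. pose proof (m_tri W HW (u n) (v n) (w n)). pose proof (m_nonneg W HW (u n) (w n)).
    rabs; lra.
  - replace (Finite 0) with (Finite (0 + 0)) by (f_equal; lra). apply is_lim_seq_plus'; auto.
Qed.

Lemma mem_crep (A : ccar W) : proj1_sig A (crep W A).
Proof. destruct (crep_spec A) as [Hc Hs]. apply Hs. apply ceqv_refl; auto. Qed.

Lemma lim_hx (u : nat -> sq_car W) : Defs.cauchy W u -> exists l, inI l /\ is_lim_seq (fun n => hx (u n)) l.
Proof.
  intros Hu. assert (ex_finite_lim_seq (fun n => hx (u n))) as [l Hl].
  { apply ex_lim_seq_cauchy_corr. intros eps. destruct (Hu eps (cond_pos eps)) as [M HM].
    exists M. intros n m Hn Hm. specialize (HM n m Hn Hm). rewrite iso in HM. unfold Dhd in HM.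
    rabs; lra. }
  exists l. split; auto. apply (lim_in (fun n => hx (u n)) l); auto. intros; apply hx_in.
Qed.

Lemma lim_hy (u : nat -> sq_car W) : Defs.cauchy W u -> exists l, inI l /\ is_lim_seq (fun n => hy (u n)) l.
Proof.
  intros Hu. assert (ex_finite_lim_seq (fun n => hy (u n))) as [l Hl].
  { apply ex_lim_seq_cauchy_corr. intros eps. destruct (Hu eps (cond_pos eps)) as [M HM].
    exists M. intros n m Hn Hm. specialize (HM n m Hn Hm). rewrite iso in HM. unfold Dhd in HM.
    rabs; lra. }
  exists l. split; auto. apply (lim_in (fun n => hy (u n)) l); auto. intros; apply hy_in.
Qed.

Definition fx (A : ccar W) : R := clamp (real (Lim_seq (fun n => hx (crep W A n)))).
Definition fy (A : ccar W) : R := clamp (real (Lim_seq (fun n => hy (crep W A n)))).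
Definition fmap (A : ccar W) : U0car :=
  exist _ (fx A, fy A) (conj (clamp_in _) (clamp_in _)).

Lemma fx_lim A : is_lim_seq (fun n => hx (crep W A n)) (ux (fmap A)).
Proof.
  destruct (lim_hx _ (proj1 (crep_spec A))) as [l [Hl Hlim]].
  unfold fmap, ux; simpl. unfold fx. rewrite (is_lim_seq_unique _ _ Hlim). simpl.
  rewrite clamp_id; auto.
Qed.
Lemma fy_lim A : is_lim_seq (fun n => hy (crep W A n)) (uy (fmap A)).
Proof.
  destruct (lim_hy _ (proj1 (crep_spec A))) as [l [Hl Hlim]].
  unfold fmap, uy; simpl. unfold fy. rewrite (is_lim_seq_unique _ _ Hlim). simpl.
  rewrite clamp_id; auto.
Qed.

Lemma lim_unique (u : nat -> R) (l1 l2 : R) : is_lim_seq u l1 -> is_lim_seq u l2 -> l1 = l2.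
Proof.
  intros H1 H2. apply is_lim_seq_unique in H1. apply is_lim_seq_unique in H2.
  rewrite H1 in H2. injection H2; auto.
Qed.

Lemma lim_dist A B : is_lim_seq (fun n => d (crep W A n) (crep W B n)) (U0dist (fmap A) (fmap B)).
Proof.
  apply is_lim_seq_ext with
    (u := fun n => Rabs (hx (crep W A n) - hx (crep W B n)) + Rabs (hy (crep W A n) - hy (crep W B n))).
  { intros n. rewrite iso. reflexivity. }
  unfold U0dist. fold (ux (fmap A)) (ux (fmap B)) (uy (fmap A)) (uy (fmap B)).
  apply is_lim_seq_plus'.
  - apply (is_lim_seq_abs _ (Finite (ux (fmap A) - ux (fmap B)))).
    apply is_lim_seq_minus'; [apply fx_lim | apply fx_lim].
  - apply (is_lim_seq_abs _ (Finite (uy (fmap A) - uy (fmap B)))).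
    apply is_lim_seq_minus'; [apply fy_lim | apply fy_lim].
Qed.

Lemma cdist_eq A B : cdist W A B = U0dist (fmap A) (fmap B).
Proof. unfold cdist. rewrite (is_lim_seq_unique _ _ (lim_dist A B)). reflexivity. Qed.

Lemma fmap_inj A B : fmap A = fmap B -> A = B.
Proof.
  intros E. pose proof (lim_dist A B) as L. rewrite E in L.
  assert (Z : U0dist (fmap B) (fmap B) = 0) by (unfold U0dist; rewrite !Rminus_diag, Rabs_R0; lra).
  rewrite Z in L.
  assert (Hab : ceqv W (crep W A) (crep W B)).
  { split; [apply (proj1 (crep_spec A))|]. split; [apply (proj1 (crep_spec B))|]. auto. }
  apply sig_ext. extensionality v. apply propositional_extensionality.
  rewrite (proj2 (crep_spec A) v), (proj2 (crep_spec B) v). split; intro H.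
  - eapply ceqv_trans; [apply ceqv_sym|]; eauto.
  - eapply ceqv_trans; eauto.
Qed.

Lemma fmap_csqm r s : inM0 r s -> fmap (csqm W HW r s) = U0map r s.
Proof.
  intros H. destruct (inM0_I r s H) as [Hr Hs].
  pose proof (mem_crep (csqm W HW r s)) as Hm. simpl in Hm. destruct Hm as [_ [_ Hl]].
  destruct (hS W h Hh r s H) as [A B].
  apply U0_eq; rewrite ?ux_U0map, ?uy_U0map by auto.
  - eapply lim_unique; [apply fx_lim|]. apply squeeze with (e := fun n => d (S r s) (crep W (csqm W HW r s) n)); auto.
    intros n. rewrite iso. unfold Dhd. rewrite A. rabs; lra.
  - eapply lim_unique; [apply fy_lim|]. apply squeeze with (e := fun n => d (S r s) (crep W (csqm W HW r s) n)); auto.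
    intros n. rewrite iso. unfold Dhd. rewrite B. rabs; lra.
Qed.

Lemma fmap_surj u : exists A, fmap A = u.
Proof.
  pose (v := fun k => proj1_sig (constructive_indefinite_description _ (dens_h k u))).
  assert (Hv : forall k, Rabs (hx (v k) - ux u) + Rabs (hy (v k) - uy u) <= 2 * (1/3)^k).
  { intros k. unfold v. destruct (constructive_indefinite_description _ _) as [w Hw]. simpl. auto. }
  assert (Hc : Defs.cauchy W v).
  { intros eps He. destruct (small_pow (1/3)) with (eps := eps/4) as [k Hk]; [lra|lra|].
    exists k. intros m n Hm Hn. rewrite iso. unfold Dhd.
    pose proof (Hv m). pose proof (Hv n).
    pose proof (pow_mono (1/3) k m ltac:(lra) Hm). pose proof (pow_mono (1/3) k n ltac:(lra) Hn).
    rabs; lra. }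
  exists (exist _ (fun v' => ceqv W v v') (ex_intro _ v (conj Hc (fun v' => iff_refl _)))).
  set (A := exist _ _ _).
  pose proof (mem_crep A) as Hm. simpl in Hm.
  assert (Hgeo : is_lim_seq (fun k => d (v k) (crep W A k) + 2 * (1/3)^k) 0).
  { replace (Finite 0) with (Finite (0 + 2 * 0)) by (f_equal; lra).
    apply is_lim_seq_plus'; [apply Hm|]. apply (is_lim_seq_scal_l _ 2 0).
    apply is_lim_seq_geom. rabs; lra. }
  apply U0_eq.
  - eapply lim_unique; [apply fx_lim|].
    apply squeeze with (e := fun k => d (v k) (crep W A k) + 2 * (1/3)^k); [|exact Hgeo].
    intros n. pose proof (Hv n). rewrite iso. unfold Dhd. rabs; lra.
  - eapply lim_unique; [apply fy_lim|].
    apply squeeze with (e := fun k => d (v k) (crep W A k) + 2 * (1/3)^k); [|exact Hgeo].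
    intros n. pose proof (Hv n). rewrite iso. unfold Dhd. rabs; lra.
Qed.

Lemma final_iso : sq_iso (completion W HW) U0.
Proof.
  pose (g := fun u => proj1_sig (constructive_indefinite_description _ (fmap_surj u))).
  assert (Hg : forall u, fmap (g u) = u).
  { intros u. unfold g. destruct (constructive_indefinite_description _ _) as [A HA]. auto. }
  exists fmap, g. split; [|split; [|split]].
  - split.
    + intros A B. simpl. rewrite cdist_eq. lra.
    + intros r s H. simpl. apply fmap_csqm; auto.
  - split.
    + intros u v. simpl. rewrite cdist_eq, !Hg. lra.
    + intros r s H. simpl. apply fmap_inj. rewrite Hg, fmap_csqm; auto.
  - intros A. apply fmap_inj. rewrite Hg. auto.
  - auto.
Qed.

End Comp.

Theorem mainTheorem9 :
  forall (W : sqdata) (lam : sq_car (tensor W) -> sq_car W) (HW : IsSquaMS W),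
    is_initial_algebra W lam ->
    sq_iso (completion W HW) U0.
Proof.
  intros W lam HW Hini.
  destruct (proj2 Hini U0 alphaU U0_sq alphaU_hom) as [h [[Hh Hhl] _]].
  exact (final_iso W lam HW Hini h Hh Hhl).
Qed.
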